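(* Let $k,t\ge1$ and let $V$ be a word of length $kt$ that has at most $k$ distinct subwords of length $k$. Then $V$ contains a subword of the form $v^t$ for some nonempty word $v$.
   Context: A subword is a contiguous factor. *)

(* Defs.v *)
From mathcomp Require Import all_boot.
Set Implicit Arguments. Unset Strict Implicit. Unset Printing Implicit Defensive.

(* Words over an alphabet T (any eqType) are sequences [seq T].
   A subword is a contiguous factor (seq's [infix]). *)

Definition factors_of_length (T : eqType) (k : nat) (V : seq T) : seq (seq T) :=
  undup [seq take k (drop i V) | i <- iota 0 (size V - k).+1].

Definition wpow (T : Type) (v : seq T) (t : nat) : seq T := flatten (nseq t v).

(* Main.v *)
Require Import Defs.
From mathcomp Require Import all_boot.
From mathcomp Require Import zify.
From Stdlib Require Import Classical.

Set Implicit Arguments. Unset Strict Implicit. Unset Printing Implicit Defensive.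

Section W.
Variables (T : eqType) (x0 : T) (V : seq T) (M : nat).

Definition fw n i := take n (drop i V).
Definition Sw n := undup [seq fw n i | i <- iota 0 M.+1].
Definition NB n := forall a b, a <= M -> b <= M -> fw n a = fw n b ->
  nth x0 V (a + n) = nth x0 V (b + n).

Lemma memS n i : i <= M -> fw n i \in Sw n.
Proof. move=> hi; rewrite mem_undup; apply: map_f; rewrite mem_iota; lia. Qed.

Lemma SP n z : z \in Sw n -> exists2 i, i <= M & z = fw n i.
Proof.
rewrite mem_undup => /mapP [i]; rewrite mem_iota => hi ->; exists i => //; lia.
Qed.

Lemma take_fw n i : take n (fw n.+1 i) = fw n i.
Proof. by rewrite /fw take_takel. Qed.

Lemma S_mono n : size (Sw n) <= size (Sw n.+1).
Proof.
rewrite -(size_map (take n) (Sw n.+1)).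
apply: uniq_leq_size; first exact: undup_uniq.
move=> z /SP [i hi ->]; rewrite -take_fw; apply: map_f; exact: memS.
Qed.

Lemma S_strict n a b : a <= M -> b <= M -> fw n a = fw n b ->
  nth x0 V (a + n) != nth x0 V (b + n) -> size (Sw n) < size (Sw n.+1).
Proof.
move=> ha hb eab hne.
set x := fw n.+1 a; set y := fw n.+1 b.
have nx : forall c, nth x0 (fw n.+1 c) n = nth x0 V (c + n).
  by move=> c; rewrite /fw nth_take // nth_drop.
have xy : x != y.
  apply: contra hne => /eqP e; by rewrite -nx -/x e nx.
have xin : x \in Sw n.+1 by exact: memS.
have yin : y \in rem x (Sw n.+1).
  by rewrite (mem_rem_uniq _ (undup_uniq _)) inE eq_sym xy memS.
have : size (Sw n) <= size (rem x (Sw n.+1)).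
  rewrite -(size_map (take n) (rem x (Sw n.+1))).
  apply: uniq_leq_size; first exact: undup_uniq.
  move=> z /SP [c hc ->].
  case: (eqVneq (fw n.+1 c) x) => hcx.
    have -> : fw n c = take n y by rewrite /y take_fw -eab -(take_fw n c) hcx take_fw.
    exact: map_f.
  rewrite -take_fw; apply: map_f.
  by rewrite (mem_rem_uniq _ (undup_uniq _)) inE hcx memS.
rewrite size_rem //.
have : 0 < size (Sw n.+1) by case: (Sw n.+1) xin.
lia.
Qed.

Lemma size_S0 : 0 < size (Sw 0).
Proof. have := memS 0 (leq0n M). by case: (Sw 0). Qed.

Lemma descent m : size (Sw m) <= m ->
  exists n, [/\ n < m, NB n & size (Sw n.+1) <= n.+1].
Proof.
elim: m => [|m IH] h.
  by have := size_S0; lia.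
case: (classic (NB m)) => hnb.
  by exists m; split.
have hlt : size (Sw m) < size (Sw m.+1).
  apply: NNPP => hc; apply: hnb => a b ha hb eab.
  case: (eqVneq (nth x0 V (a + m)) (nth x0 V (b + m))) => // hne.
  by exfalso; apply: hc; exact: (S_strict ha hb eab hne).
have [|n [h1 h2 h3]] := IH; first lia.
by exists n; split => //; lia.
Qed.

Lemma fw_eq n a b : a + n <= size V -> b + n <= size V ->
  (forall r, r < n -> nth x0 V (a + r) = nth x0 V (b + r)) -> fw n a = fw n b.
Proof.
move=> ha hb h; apply: (eq_from_nth (x0 := x0)).
  rewrite /fw !size_take !size_drop; case: ifP; case: ifP; lia.
move=> r; rewrite /fw size_take size_drop => hr.
have hrn : r < n by move: hr; case: ifP; lia.
by rewrite !nth_take // !nth_drop h.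
Qed.

Lemma fw_nth n a b r : fw n a = fw n b -> r < n ->
  nth x0 V (a + r) = nth x0 V (b + r).
Proof.
move=> e hr; have := congr1 (fun s => nth x0 s r) e.
by rewrite /fw /= !nth_take // !nth_drop.
Qed.

End W.

Lemma periodic_pow (T : eqType) (x0 : T) p : forall t s L,
  (forall x, x + p < L -> nth x0 s x = nth x0 s (x + p)) ->
  p * t <= L -> L <= size s -> wpow (take p s) t = take (p * t) s.
Proof.
elim=> [|t IH] s L hp hL hs.
  by rewrite muln0 take0.
rewrite /wpow /= -/(wpow _ _).
case: t IH hL => [|t] IH hL.
  by rewrite /wpow /= cats0 muln1.
rewrite mulnS takeD; congr (_ ++ _).
have -> : take p s = take p (drop p s).
  apply: (eq_from_nth (x0 := x0)).
    rewrite !size_take size_drop; case: ifP; case: ifP; lia.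
  move=> r; rewrite size_take => hr.
  have hrp : r < p by move: hr; case: ifP; lia.
  rewrite !nth_take // nth_drop addnC hp //; lia.
apply: (IH _ (L - p)).
- move=> x hx; rewrite !nth_drop; have := hp (p + x); rewrite addnA; apply; lia.
- lia.
- rewrite size_drop; lia.
Qed.

Theorem lemmac (T : eqType) (k t : nat) (V : seq T) :
  1 <= k -> 1 <= t -> size V = k * t ->
  size (factors_of_length k V) <= k ->
  exists v : seq T, v != [::] /\ infix (wpow v t) V.
Proof.
move=> hk ht hV hF.
case: (ltnP t 2) => ht2.
  have t1 : t = 1 by lia.
  subst t; exists V; split.
    by apply/eqP => e; move: hV; rewrite e /=; lia.
  by rewrite /wpow /= cats0 infix_refl.
case: V hV hF => [|x0 V'] hV hF; first by move: hV => /=; lia.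
set V := x0 :: V' in hV hF *.
set M := k * t - k.
have hMk : k <= M /\ M + k = k * t by rewrite /M; nia.
have hFS : factors_of_length k V = Sw V M k by rewrite /factors_of_length /Sw hV.
have [n [hnk hnb hsz]] := descent x0 (M := M) (m := k) (V := V) (ltac:(rewrite -hFS //)).
have hsn : size (Sw V M n) <= n.+1 by have := S_mono V M n; lia.
set s := [seq fw V n i | i <- iota 0 n.+2].
have nu : ~~ uniq s.
  apply/negP => u.
  have : size s <= size (Sw V M n).
    apply: uniq_leq_size => // z /mapP [i]; rewrite mem_iota => hi ->.
    apply: memS; lia.
  rewrite size_map size_iota; lia.
have /(uniqPn [::]) [i [j [hij hj heq]]] := nu.
move: hj heq; rewrite /s size_map size_iota => hj.
rewrite !(nth_map 0) ?size_iota //; try lia. rewrite !nth_iota //; try lia. rewrite !add0n => heq.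
set p := j - i.
have Hm : forall m, j + m <= M -> forall r, r <= n ->
    nth x0 V (i + m + r) = nth x0 V (j + m + r).
  elim=> [|m IHm] hm r hr.
    rewrite !addn0; case: (ltnP r n) => hrn.
      exact: fw_nth heq hrn.
    have -> : r = n by lia.
    apply: hnb heq; lia.
  case: (ltnP r n) => hrn.
    have := IHm ltac:(lia) r.+1 hrn; by rewrite !addnS !addSn.
  have -> : r = n by lia.
  apply: hnb; try lia.
  apply: (fw_eq (x0 := x0)); rewrite ?hV; try lia.
  move=> r' hr'; have := IHm ltac:(lia) r'.+1 hr'; by rewrite !addnS !addSn.
have hper : forall x, x + p < M + n + 1 - i ->
    nth x0 (drop i V) x = nth x0 (drop i V) (x + p).
  move=> x hx; rewrite !nth_drop.
  case: (leqP x (M - j)) => hxm.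
    have := Hm x ltac:(lia) 0 (leq0n n).
    rewrite !addn0 => ->; congr nth; lia.
  have := Hm (M - j) ltac:(lia) (x - (M - j)) ltac:(lia).
  have -> : i + (M - j) + (x - (M - j)) = i + x by lia.
  move=> ->; congr nth; lia.
exists (take p (drop i V)); split.
  apply/eqP => e; have := congr1 size e; rewrite size_take size_drop hV /=.
  case: ifP; lia.
rewrite (periodic_pow hper); first last.
- rewrite size_drop hV; lia.
- nia.
apply/infixP; exists (take i V), (drop (p * t) (drop i V)).
by rewrite !cat_take_drop.
Qed.
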